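(* For every finite subset $B\subseteq A$, the set $\{b\in\mathrm{Cl}(B)\mid \mathrm{pr}_3(b)\neq0\}$ is finite.
   Context: Let $\langle P,\preccurlyeq,\preccurlyeq^\ast\rangle$ be a doubly ordered set: $\preccurlyeq$ a partial order on $P$, $\preccurlyeq^\ast$ a preorder on $P$, and $p\preccurlyeq q\Rightarrow p\preccurlyeq^\ast q$. Write $p\prec q$ for ($p\preccurlyeq q$ and $p\neq q$). For a quadruple $\langle x_0,x_1,x_2,x_3\rangle$ and $i<4$, $\mathrm{pr}_i(\langle x_0,x_1,x_2,x_3\rangle)=x_i$. Define recursively $A_0=\{\langle0,p,\varnothing,k\rangle\mid p\in P,k\in\omega\}$ and $A_{n+1}=A_n\cup\{\langle n+1,q,a,0\rangle\mid q\in P,a\in A_n,\mathrm{pr}_1(a)\prec q\}\cup\{\langle n+1,q,a,k\rangle\mid q\in P,a\in A_n,\mathrm{pr}_1(a)\not\preccurlyeq q,\mathrm{pr}_1(a)\preccurlyeq^\ast q,k\in\omega\}$; let $A=\bigcup_{n}A_n$. A subset $C\subseteq A$ is closed if (i) for all $n\in\omega$, all $a\in C\cap A_n$ and all $q\in P$ with $\mathrm{pr}_1(a)\prec q$, we have $\langle n+1,q,a,0\rangle\in C$, and (ii) for all $b\in C\setminus A_0$, $\mathrm{pr}_2(b)\in C$. For $B\subseteq A$, $\mathrm{Cl}(B)$ is the least closed subset of $A$ including $B$. *)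

(* Defs.v *)
From Stdlib Require Import List.

Set Implicit Arguments.

(* Quadruples <x0,x1,x2,x3> with x0 a level, x1 a point of P, x2 either the
   empty set (None) or an earlier quadruple (Some a), x3 a natural number. *)
Inductive quad (P : Type) : Type :=
  Quad : nat -> P -> option (quad P) -> nat -> quad P.

Section Defs.
Variable P : Type.
Variables le les : P -> P -> Prop.

Definition pr0 (x : quad P) : nat := match x with Quad n _ _ _ => n end.
Definition pr1 (x : quad P) : P := match x with Quad _ p _ _ => p end.
Definition pr2 (x : quad P) : option (quad P) := match x with Quad _ _ a _ => a end.
Definition pr3 (x : quad P) : nat := match x with Quad _ _ _ k => k end.

Definition lt (p q : P) : Prop := le p q /\ p <> q.

Definition partial_order (r : P -> P -> Prop) : Prop :=
  (forall p, r p p) /\ (forall p q, r p q -> r q p -> p = q) /\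
  (forall p q s, r p q -> r q s -> r p s).

Definition preorder (r : P -> P -> Prop) : Prop :=
  (forall p, r p p) /\ (forall p q s, r p q -> r q s -> r p s).

Definition doubly_ordered : Prop :=
  partial_order le /\ preorder les /\ (forall p q, le p q -> les p q).

Fixpoint An (n : nat) : quad P -> Prop :=
  match n with
  | 0 => fun x => exists p k, x = Quad 0 p None k
  | S m => fun x =>
      An m x
      \/ (exists q a, x = Quad (S m) q (Some a) 0 /\ An m a /\ lt (pr1 a) q)
      \/ (exists q a k, x = Quad (S m) q (Some a) k /\ An m a /\
            ~ le (pr1 a) q /\ les (pr1 a) q)
  end.

Definition A (x : quad P) : Prop := exists n, An n x.

Definition closed (C : quad P -> Prop) : Prop :=
  (forall x, C x -> A x) /\
  (forall n a q, C a -> An n a -> lt (pr1 a) q -> C (Quad (S n) q (Some a) 0)) /\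
  (forall b, C b -> ~ An 0 b -> exists a, pr2 b = Some a /\ C a).

Definition Cl (B : quad P -> Prop) (x : quad P) : Prop :=
  forall C, closed C -> (forall y, B y -> C y) -> C x.

End Defs.

Definition finite_set (T : Type) (S : T -> Prop) : Prop :=
  exists l : list T, forall x, S x -> In x l.

(* Main.v *)
Require Import Defs.
From Stdlib Require Import List.

Fixpoint anc {P : Type} (x : quad P) : list (quad P) :=
  match x with
  | Quad n p o k => Quad n p o k :: match o with Some a => anc a | None => nil end
  end.

Lemma anc_self (P : Type) (x : quad P) : In x (anc x).
Proof. destruct x; simpl; auto. Qed.

Lemma anc_closed (P : Type) : forall (y b a : quad P),
  In b (anc y) -> pr2 b = Some a -> In a (anc y).
Proof.
  fix IH 1. intros y b a Hin Hp. destruct y as [n p o k]. simpl in Hin.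
  destruct Hin as [<-|Hin].
  - simpl in Hp. subst o. simpl. right. apply anc_self.
  - destruct o as [c|]; [|contradiction].
    simpl. right. exact (IH c b a Hin Hp).
Qed.

Lemma An_parent (P : Type) (le les : P -> P -> Prop) : forall n b a,
  An le les n b -> pr2 b = Some a -> exists m, An le les m a.
Proof.
  induction n; intros b a H Hp; simpl in H.
  - destruct H as [p [k ->]]. discriminate.
  - destruct H as [H|[[q [c [-> [H _]]]]|[q [c [k [-> [H _]]]]]]].
    + eauto.
    + simpl in Hp. injection Hp as <-. eauto.
    + simpl in Hp. injection Hp as <-. eauto.
Qed.

Lemma An_none (P : Type) (le les : P -> P -> Prop) : forall n b,
  An le les n b -> pr2 b = None -> An le les 0 b.
Proof.
  induction n; intros b H Hp; simpl in H; auto.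
  destruct H as [H|[[q [c [-> _]]]|[q [c [k [-> _]]]]]]; auto; discriminate.
Qed.

Inductive D {P : Type} (L : list (quad P)) : quad P -> Prop :=
| D_L x : In x L -> D L x
| D_step n q a : D L a -> D L (Quad n q (Some a) 0).

Theorem lemma2p2 (P : Type) (le les : P -> P -> Prop)
  (Hdo : doubly_ordered le les)
  (B : quad P -> Prop)
  (HBA : forall x, B x -> A le les x)
  (HBfin : finite_set B) :
  finite_set (fun b => Cl le les B b /\ pr3 b <> 0).
Proof.
  destruct HBfin as [l Hl].
  set (L := flat_map (@anc P) l).
  exists L. intros b [Hcl H3].
  assert (HC : A le les b /\ D L b).
  { apply Hcl.
    - split; [|split].
      + intros x [Hx _]; exact Hx.
      + intros n a q [Ha Da] Han Hlt. split.
        * exists (S n). simpl. right. left. eauto.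
        * apply D_step; auto.
      + intros x [[m Hx] Dx] Hn0.
        destruct (pr2 x) as [a|] eqn:E.
        2:{ exfalso. apply Hn0. eapply An_none; eauto. }
        exists a. split; auto.
        destruct (@An_parent P le les m x a Hx E) as [m' Ha].
        split; [exists m'; exact Ha|].
        destruct Dx as [x Hin|n q c Dc].
        * apply D_L. unfold L in *. apply in_flat_map in Hin.
          destruct Hin as [y [Hy Hiny]]. apply in_flat_map.
          exists y. split; auto. eapply anc_closed; eauto.
        * simpl in E. injection E as <-. exact Dc.
    - intros y By. split; auto. apply D_L. unfold L. apply in_flat_map.
      exists y. split; auto. apply anc_self. }
  destruct HC as [_ Db]. destruct Db as [x Hin|n q a _]; auto.
  simpl in H3. congruence.
Qed.
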